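(* Let $X$ be a measure space, let $\Phi_1,\Phi_2,\Phi_3$ be Young functions and $u_1,u_2,u_3:X\to(0,\infty)$ weights such that $\Phi_1^{-1}(t)\Phi_2^{-1}(t)\le\Phi_3^{-1}(t)$ for every $t>0$ and $u_3(x)\le u_1(x)u_2(x)$ for every $x\in X$. If $f_1\in wL_{\Phi_1}^{u_1}(X)$ and $f_2\in wL_{\Phi_2}^{u_2}(X)$, then $f_1f_2\in wL_{\Phi_3}^{u_3}(X)$ and $$\|f_1f_2\|_{wL_{\Phi_3}^{u_3}(X)}\le 2\|f_1\|_{wL_{\Phi_1}^{u_1}(X)}\|f_2\|_{wL_{\Phi_2}^{u_2}(X)}.$$
   Context: A Young function is a function $\Phi:[0,\infty)\to[0,\infty)$ that is convex, left-continuous, satisfies $\lim_{t\to0}\Phi(t)=0=\Phi(0)$ and $\lim_{t\to\infty}\Phi(t)=\infty$. Its generalized inverse is $\Phi^{-1}(s):=\inf\{r\ge0:\Phi(r)>s\}$. For a Young function $\Phi$ and a weight $u:X\to(0,\infty)$, the weighted weak Orlicz space $wL_\Phi^u(X)$ is the set of measurable $f:X\to\mathbb{R}$ with $\|f\|_{wL_\Phi^u(X)} := \inf\{ b>0 : \sup_{t>0} \Phi(t)\,|\{x\in X : |u(x)f(x)|/b > t\}| \le 1\} < \infty$, where $|\cdot|$ denotes the measure on $X$. *)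

(* Defs.v *)
From HB Require Import structures.
From mathcomp Require Import all_boot all_order all_algebra.
From mathcomp Require Import all_classical all_reals all_analysis.
Set Implicit Arguments. Unset Strict Implicit. Unset Printing Implicit Defensive.
Import Order.TTheory GRing.Theory Num.Theory.
Import numFieldNormedType.Exports.
Local Open Scope classical_set_scope.
Local Open Scope ring_scope.

Section young.
Context {R : realType}.

(* A Young function Phi : [0,oo) -> [0,oo); values of Phi on negative
   arguments are irrelevant and unconstrained. *)
Definition young (Phi : R -> R) : Prop :=
  [/\ (forall t, 0 <= t -> 0 <= Phi t),
      (forall x y l, 0 <= x -> 0 <= y -> 0 <= l -> l <= 1 ->
         Phi (l * x + (1 - l) * y) <= l * Phi x + (1 - l) * Phi y),
      (forall t, 0 < t -> Phi x @[x --> t^'-] --> Phi t),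
      Phi 0 = 0 /\ Phi x @[x --> 0^'+] --> 0 &
      Phi x @[x --> +oo] --> +oo].

Definition young_inv (Phi : R -> R) (s : R) : R :=
  inf [set r : R | 0 <= r /\ s < Phi r].
End young.

Section weak_orlicz.
Context {d : measure_display} {T : measurableType d} {R : realType}.
Variable mu : {measure set T -> \bar R}.

Definition wL_admissible (Phi : R -> R) (u f : T -> R) : set R :=
  [set b : R | 0 < b /\
     forall t : R, 0 < t ->
       ((Phi t)%:E * mu [set x | (t < `|u x * f x| / b)%R] <= 1)%E].

(* ||f||_{wL_Phi^u(X)} as an extended real (inf of the empty set is +oo) *)
Definition wL_norm (Phi : R -> R) (u f : T -> R) : \bar R :=
  ereal_inf [set b%:E | b in wL_admissible Phi u f].

Definition in_wL (Phi : R -> R) (u f : T -> R) : Prop :=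
  measurable_fun setT f /\ (wL_norm Phi u f < +oo)%E.
End weak_orlicz.

(* Main.v *)
Require Import Defs.
From HB Require Import structures.
From mathcomp Require Import all_boot all_order all_algebra.
From mathcomp Require Import all_classical all_reals all_analysis.
From mathcomp Require Import ring lra.
Import Order.TTheory GRing.Theory Num.Theory.
Local Open Scope classical_set_scope.
Local Open Scope ring_scope.

Lemma young_mono (R : realType) (Phi : R -> R) : young Phi ->
  forall x y, 0 <= x -> x <= y -> Phi x <= Phi y.
Proof.
case=> ge0 cvx _ [P0 _] _ x y x0 xy.
have y0 : 0 <= y by apply: le_trans xy.
case: (eqVneq y 0) => [y00|yn0].
  have -> : x = y by apply/eqP; rewrite eq_le xy y00 x0.
  by [].
have ypos : 0 < y by rewrite lt_def yn0 y0.
have l0 : 0 <= x / y by rewrite divr_ge0.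
have l1 : x / y <= 1 by rewrite ler_pdivrMr // mul1r.
have := cvx y 0 (x / y) y0 (lexx 0) l0 l1.
rewrite mulr0 addr0 P0 mulr0 addr0 divfK // => h.
apply: le_trans h _.
by apply: ler_piMl => //; apply: ge0.
Qed.

Lemma young_half (R : realType) (Phi : R -> R) t : young Phi -> 0 <= t ->
  Phi t <= Phi (2 * t) / 2.
Proof.
case=> ge0 cvx _ [P0 _] _ t0.
have h0 : (0:R) <= 1/2 by [].
have h1 : (1:R)/2 <= 1 by rewrite ler_pdivrMr // mul1r ler1n.
have := cvx (2 * t) 0 (1/2) _ (lexx 0) h0 h1.
rewrite mulr0 addr0 P0 mulr0 addr0.
have -> : 1 / 2 * (2 * t) = t by field.
move=> h; apply: le_trans (h _) _; first by rewrite mulr_ge0.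
by rewrite mul1r mulrC.
Qed.

Lemma young_big (R : realType) (Phi : R -> R) s : young Phi ->
  exists r, 0 <= r /\ s < Phi r.
Proof.
case=> _ _ _ _ /cvgryPge /(_ (s + 1)) H.
have : \forall r \near +oo, 0 <= r /\ s + 1 <= Phi r.
  near=> r; split; near: r; last exact: H.
  exact: nbhs_pinfty_ge.
case/filter_ex => r [r0 hr]; exists r; split => //.
by apply: lt_le_trans hr; rewrite ltrDl.
Unshelve. all: by end_near.
Qed.

Lemma young_inv_ge0 (R : realType) (Phi : R -> R) s : young Phi ->
  0 <= young_inv Phi s.
Proof.
move=> yP; rewrite /young_inv; apply: lb_le_inf.
  by have [r hr] := @young_big _ _ s yP; exists r.
by move=> r [].
Qed.

Lemma young_inv_lt (R : realType) (Phi : R -> R) s t : young Phi ->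
  young_inv Phi s < t -> s < Phi t.
Proof.
move=> yP; rewrite /young_inv => /inf_lt.
have [r hr] := @young_big _ _ s yP.
case=> [|r' [r'0 hr'] r't]; first by exists r.
apply: lt_le_trans hr' _; apply: young_mono => //; exact: ltW.
Qed.

Lemma young_inv_lt2 (R : realType) (Phi : R -> R) s t : young Phi ->
  0 < t -> s < Phi t -> young_inv Phi s < t.
Proof.
move=> yP t0 st.
have yP' := yP; case: yP' => _ _ lc _ _.
have H := cvgr_gt _ (lc t t0) _ st.
have : \forall r \near t^'-, [/\ 0 < r, r < t & s < Phi r].
  near=> r; split; near: r; [exact: nbhs_left_gt|exact: nbhs_left_lt|exact: H].
case/filter_ex => r [r0 rt sr].
apply: le_lt_trans rt; rewrite /young_inv.
apply: ge_inf; last by split=> //; exact: ltW.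
by exists 0 => x [].
Unshelve. all: by end_near.
Qed.

Lemma real_sup_lemma (R : realType) (s m : R) : 0 <= m ->
  (forall s', 0 < s' < s -> s' * m <= 2) -> s * m <= 2.
Proof.
move=> m0 H; rewrite leNgt; apply/negP => hs.
have mpos : 0 < m.
  rewrite lt_def m0 andbT; apply/eqP => m00; move: hs; rewrite m00 mulr0.
  by rewrite ltNge ler0n.
have sm : 2 / m < s by rewrite ltr_pdivrMr.
have s0 : 0 < s by apply: le_lt_trans sm; rewrite divr_ge0 // ltW.
have := H ((2 / m + s) / 2).
have e : (2 / m + s) / 2 * m = (2 + s * m) / 2 by field; rewrite gt_eqF.
rewrite e ler_pdivrMr // => /(_ _)/negP; apply.
  apply/andP; split.
    by rewrite divr_gt0 // addr_gt0 // divr_gt0.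
  by rewrite ltr_pdivrMr //; lra.
by lra.
Qed.

Lemma meas_set (d : measure_display) (T : measurableType d) (R : realType)
  (u f : T -> R) (b t : R) :
  measurable_fun setT u -> measurable_fun setT f ->
  measurable [set x | t < `|u x * f x| / b].
Proof.
move=> mu mf.
have mg : measurable_fun setT (fun x => `|u x * f x| / b).
  change (measurable_fun setT (( *%R^~ b^-1) \o (Num.norm \o (u \* f)))).
  apply: measurableT_comp; first exact: measurable_realfun.mulrr_measurable.
  apply: measurableT_comp; first exact: measurable_realfun.normr_measurable.
  exact: measurable_realfun.measurable_funM.
have := mg measurableT _ (measurable_itv `]t, +oo[).
rewrite setTI.
have -> : [set x | t < `|u x * f x| / b] =
   (fun x => `|u x * f x| / b) @^-1` `]t, +oo[.
  by apply/seteqP; split => x /=; rewrite in_itv /= andbT.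
by [].
Qed.

Lemma adm_prod (d : measure_display) (T : measurableType d) (R : realType)
  (mu : {measure set T -> \bar R})
  (Phi1 Phi2 Phi3 : R -> R) (u1 u2 u3 : T -> R) (f1 f2 : T -> R) (b1 b2 : R) :
  young Phi1 -> young Phi2 -> young Phi3 ->
  (forall x, 0 < u1 x) -> (forall x, 0 < u2 x) -> (forall x, 0 < u3 x) ->
  measurable_fun setT u1 -> measurable_fun setT u2 -> measurable_fun setT u3 ->
  (forall t, 0 < t -> young_inv Phi1 t * young_inv Phi2 t <= young_inv Phi3 t) ->
  (forall x, u3 x <= u1 x * u2 x) ->
  measurable_fun setT f1 -> measurable_fun setT f2 ->
  wL_admissible mu Phi1 u1 f1 b1 -> wL_admissible mu Phi2 u2 f2 b2 ->
  wL_admissible mu Phi3 u3 (fun x => f1 x * f2 x) (2 * b1 * b2).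
Proof.
move=> y1 y2 y3 u1p u2p u3p mu1 mu2 mu3 hinv hu mf1 mf2 [b1p A1] [b2p A2].
have b0 : 0 < 2 * b1 * b2 by rewrite !mulr_gt0.
split => // t t0 /=.
set A := [set x | _].
have mA : measurable A by apply: meas_set => //; exact: measurable_realfun.measurable_funM.
have y3' := y3; case: y3' => P3ge0 _ _ _ _.
have [->|Pt] := eqVneq (Phi3 t) 0; first by rewrite mul0e.
have Pt0 : 0 < Phi3 t by rewrite lt_def Pt P3ge0 // ltW.
set s := Phi3 (2 * t).
have sge : Phi3 t <= s / 2 by apply: young_half => //; exact: ltW.
have t20 : 0 < 2 * t by rewrite mulr_gt0.
have key : forall s', 0 < s' < s -> (s'%:E * mu A <= 2%:E)%E.
  move=> s' /andP[s'0 s's].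
  have a3 : young_inv Phi3 s' < 2 * t by apply: young_inv_lt2.
  set a1 := young_inv Phi1 s'; set a2 := young_inv Phi2 s'.
  have a10 : 0 <= a1 by apply: young_inv_ge0.
  have a20 : 0 <= a2 by apply: young_inv_ge0.
  have a12 : a1 * a2 < 2 * t by apply: le_lt_trans (hinv _ s'0) a3.
  set del := (2 * t - a1 * a2) / (a2 + 1).
  have a21 : 0 < a2 + 1 by rewrite ltr_wpDl.
  have del0 : 0 < del by rewrite divr_gt0 // subr_gt0.
  have hdel : del * (a2 + 1) = 2 * t - a1 * a2 by rewrite divfK // gt_eqF.
  set t1 := a1 + del.
  have t10 : 0 < t1 by rewrite ltr_wpDl.
  set t2 := 2 * t / t1.
  have t12 : t1 * t2 = 2 * t by rewrite /t2 mulrC divfK // gt_eqF.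
  have a1t1 : a1 < t1 by rewrite ltrDl.
  have a2t2 : a2 < t2 by rewrite /t2 ltr_pdivlMr // /t1; nra.
  have P1 : s' < Phi1 t1 by apply: young_inv_lt.
  have P2 : s' < Phi2 t2 by apply: young_inv_lt.
  have t20' : 0 < t2 by apply: le_lt_trans a2t2.
  set B1 := [set x | t1 < `|u1 x * f1 x| / b1].
  set B2 := [set x | t2 < `|u2 x * f2 x| / b2].
  have mB1 : measurable B1 by exact: meas_set.
  have mB2 : measurable B2 by exact: meas_set.
  have sub : A `<=` B1 `|` B2.
    move=> x; rewrite /A /B1 /B2 /=.
    move=> hx.
    have [h1|h1] := ltP t1 (`|u1 x * f1 x| / b1); first by left.
    have [h2|h2] := ltP t2 (`|u2 x * f2 x| / b2); first by right.
    exfalso; move: hx; apply/negP; rewrite -leNgt ler_pdivrMr //.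
    move: h1 h2; rewrite !ler_pdivrMr // => h1 h2.
    have hU : `|u3 x * (f1 x * f2 x)| <= `|u1 x * f1 x| * `|u2 x * f2 x|.
      rewrite !normrM (gtr0_norm (u1p x)) (gtr0_norm (u2p x)) (gtr0_norm (u3p x)).
      rewrite mulrACA; apply: ler_wpM2r; first by rewrite mulr_ge0.
      exact: hu.
    apply: le_trans hU _.
    apply: le_trans (ler_pM (normr_ge0 _) (normr_ge0 _) h1 h2) _.
    have -> : t1 * b1 * (t2 * b2) = (t1 * t2) * (b1 * b2) by ring.
    by rewrite t12 le_eqVlt; apply/orP; left; apply/eqP; ring.
  have hA : (mu A <= mu B1 + mu B2)%E.
    apply: le_trans (measureU2 mu mB1 mB2).
    by apply: le_measure => //; rewrite inE //; exact: measurableU.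
  apply: (@le_trans _ _ (s'%:E * (mu B1 + mu B2))%E).
    by apply: lee_wpmul2l => //; rewrite lee_fin ltW.
  rewrite ge0_muleDr //.
  have h1 : (s'%:E * mu B1 <= 1)%E.
    apply: le_trans (A1 t1 t10); apply: lee_wpmul2r => //; rewrite lee_fin; exact: ltW.
  have h2 : (s'%:E * mu B2 <= 1)%E.
    apply: le_trans (A2 t2 t20'); apply: lee_wpmul2r => //; rewrite lee_fin; exact: ltW.
  apply: le_trans (leeD h1 h2) _.
  by rewrite -EFinD lee_fin; lra.
have mA0 : (0 <= mu A)%E by exact: measure_ge0.
have s0 : 0 < s by move: (lt_le_trans Pt0 sge); rewrite divr_gt0 //; lra.
case E: (mu A) mA0 key => [m| |] // mA0 key.
  rewrite lee_fin in mA0.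
  have : s * m <= 2.
    apply: (@real_sup_lemma _ _ _ mA0) => s1 hs1.
    by have := key s1 hs1; rewrite -EFinM lee_fin.
  move=> hsm; rewrite -EFinM lee_fin.
  have : Phi3 t * m <= s / 2 * m by apply: ler_wpM2r.
  lra.
have hs2 : 0 < s / 2 < s by apply/andP; split; [rewrite divr_gt0|lra].
move: (key _ hs2); rewrite mulr_infty gtr0_sg ?divr_gt0 // mul1e.
by rewrite leNgt ltey.
Qed.

Lemma wL_norm_ge0 (d : measure_display) (T : measurableType d) (R : realType)
  (mu : {measure set T -> \bar R}) (Phi : R -> R) (u f : T -> R) :
  (0 <= wL_norm mu Phi u f)%E.
Proof.
apply: le_ereal_inf_tmp => _ [b [bp _] <-]; rewrite lee_fin; exact: ltW.
Qed.

Lemma wL_norm_fin (d : measure_display) (T : measurableType d) (R : realType)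
  (mu : {measure set T -> \bar R}) (Phi : R -> R) (u f : T -> R) :
  (wL_norm mu Phi u f < +oo)%E ->
  exists2 n, wL_norm mu Phi u f = n%:E & 0 <= n.
Proof.
move=> h; exists (fine (wL_norm mu Phi u f)).
  by rewrite fineK // ge0_fin_numE // wL_norm_ge0.
by apply: fine_ge0; exact: wL_norm_ge0.
Qed.

Theorem theorem3p1 (d : measure_display) (T : measurableType d) (R : realType)
  (mu : {measure set T -> \bar R})
  (Phi1 Phi2 Phi3 : R -> R) (u1 u2 u3 : T -> R) (f1 f2 : T -> R) :
  young Phi1 -> young Phi2 -> young Phi3 ->
  (forall x, 0 < u1 x) -> (forall x, 0 < u2 x) -> (forall x, 0 < u3 x) ->
  measurable_fun setT u1 -> measurable_fun setT u2 -> measurable_fun setT u3 ->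
  (forall t, 0 < t -> young_inv Phi1 t * young_inv Phi2 t <= young_inv Phi3 t) ->
  (forall x, u3 x <= u1 x * u2 x) ->
  in_wL mu Phi1 u1 f1 -> in_wL mu Phi2 u2 f2 ->
  in_wL mu Phi3 u3 (fun x => f1 x * f2 x)%R /\
  (wL_norm mu Phi3 u3 (fun x => f1 x * f2 x)%R
     <= 2%:E * wL_norm mu Phi1 u1 f1 * wL_norm mu Phi2 u2 f2)%E.
Proof.
move=> y1 y2 y3 u1p u2p u3p mu1 mu2 mu3 hinv hu [mf1 N1] [mf2 N2].
have [_ [b1 hb1 <-] _] := ereal_inf_lt N1.
have [_ [b2 hb2 <-] _] := ereal_inf_lt N2.
have N3le : forall c1 c2, wL_admissible mu Phi1 u1 f1 c1 ->
    wL_admissible mu Phi2 u2 f2 c2 ->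
    (wL_norm mu Phi3 u3 (fun x => f1 x * f2 x)%R <= (2 * c1 * c2)%:E)%E.
  move=> c1 c2 hc1 hc2; apply: ereal_inf_lbound; exists (2 * c1 * c2) => //.
  exact: (@adm_prod _ _ _ _ _ _ _ _ _ _ _ _ _ _ y1 y2 y3 u1p u2p u3p mu1 mu2 mu3 hinv hu mf1 mf2 hc1 hc2).
have N3fin : (wL_norm mu Phi3 u3 (fun x => f1 x * f2 x)%R < +oo)%E.
  by apply: le_lt_trans (N3le _ _ hb1 hb2) _; exact: ltey.
split.
  split => //.
  exact: measurable_realfun.measurable_funM.
have [x e3 x0] := @wL_norm_fin _ _ _ _ _ _ _ N3fin.
have [n1 e1 n10] := @wL_norm_fin _ _ _ _ _ _ _ N1.
have [n2 e2 n20] := @wL_norm_fin _ _ _ _ _ _ _ N2.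
have step1 : forall c2, wL_admissible mu Phi2 u2 f2 c2 -> x <= 2 * c2 * n1.
  move=> c2 hc2; have c2p := hc2.1.
  have : ((x / (2 * c2))%:E <= wL_norm mu Phi1 u1 f1)%E.
    apply: le_ereal_inf_tmp => _ [c1 hc1 <-].
    rewrite lee_fin ler_pdivrMr ?mulr_gt0 //.
    by have := N3le c1 c2 hc1 hc2; rewrite e3 lee_fin; lra.
  by rewrite e1 lee_fin ler_pdivrMr ?mulr_gt0 //; lra.
rewrite e3 e1 e2 -!EFinM lee_fin.
have [n100|n1p] := eqVneq n1 0.
  have := step1 _ hb2; rewrite n100; lra.
have n1g : 0 < n1 by rewrite lt_def n1p n10.
have : ((x / (2 * n1))%:E <= wL_norm mu Phi2 u2 f2)%E.
  apply: le_ereal_inf_tmp => _ [c2 hc2 <-].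
  rewrite lee_fin ler_pdivrMr ?mulr_gt0 //.
  by have := step1 c2 hc2; lra.
by rewrite e2 lee_fin ler_pdivrMr ?mulr_gt0 //; lra.
Qed.
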